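(* In the setting of the quantum deformed-oscillator realization ($\mathcal A$, $f\mapsto f(N)$, $b$, $b^\dagger$, $\Phi$, and $\mathbf A,\mathbf B,\mathbf C$ built from functions $A,h,\rho:\mathbb Z\to\mathbb C$), assume for all $n\in\mathbb Z$ conditions (q1) $(\Delta A(n))^2=\delta+\beta(A(n)+A(n+1))$, (q2) $\sum_{i=1}^{L+1}\alpha_iA(n)^i+\delta h(n)+\epsilon+2\beta A(n)h(n)=0$, (q3) $\Delta A(n)-\Delta A(n+1)=-\beta$, and (q4) $\Delta A(n)(h(n+1)-h(n))=-\beta(h(n+1)+h(n))+\sum_{i=1}^{L}\omega_i(A(n+1)^i+A(n)^i)+\eta$. Let $k_1,\dots,k_{M+1}\in\mathbb C$ be arbitrary and $$K=\mathbf C^2-\sum_{i=1}^{L+1}\alpha_i\{\mathbf A^i,\mathbf B\}-\beta\sum_{i=1}^{L}\omega_i\{\mathbf A^i,\mathbf B\}-\beta\{\mathbf A,\mathbf B^2\}+\sum_{i=1}^{M+1}k_i\mathbf A^i-(2\epsilon+\beta\eta)\mathbf B+(\beta^2-\delta)\mathbf B^2 .$$ Then $K=\kappa(N)$, where $$\begin{aligned}\kappa(n)={}&-(\Delta A(n-1))^2\rho(n-1)^2\Phi(n)-(\Delta A(n))^2\rho(n)^2\Phi(n+1)-2\sum_{i=1}^{L+1}\alpha_iA(n)^ih(n)-2\beta\sum_{i=1}^{L}\omega_iA(n)^ih(n)\\&-2\beta A(n)h(n)^2-2\beta A(n)\big(\rho(n-1)^2\Phi(n)+\rho(n)^2\P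hi(n+1)\big)+\sum_{i=1}^{M+1}k_iA(n)^i-(2\epsilon+\beta\eta)h(n)\\&+(\beta^2-\delta)\big(h(n)^2+\rho(n-1)^2\Phi(n)+\rho(n)^2\Phi(n+1)\big).\end{aligned}$$
   Context: Setting: $M\ge1$, $L=\lfloor M/2\rfloor$, complex constants $\alpha_1,\dots,\alpha_{L+1},\beta,\delta,\epsilon,\eta,\omega_1,\dots,\omega_L$. $\mathcal A$ is a unital associative algebra over $\mathbb C$ with elements $b,b^\dagger$ and a unital algebra homomorphism $f\mapsto f(N)$ from functions $\mathbb Z\to\mathbb C$ into $\mathcal A$ with $f(N)b^\dagger=b^\dagger f(N+1)$, $f(N)b=bf(N-1)$, $b^\dagger b=\Phi(N)$, $bb^\dagger=\Phi(N+1)$. $\Delta A(n)=A(n+1)-A(n)$, $\mathbf A=A(N)$, $\mathbf B=h(N)+b^\dagger\rho(N)+\rho(N)b$, $\mathbf C=b^\dagger\Delta A(N)\rho(N)-\rho(N)\Delta A(N)b$. $[X,Y]=XY-YX$, $\{X,Y\}=XY+YX$. The function $h$ is the paper's $b(N)$. *)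

(* Defs.v *)
From HB Require Import structures.
From mathcomp Require Import all_boot all_order all_algebra.
Set Implicit Arguments. Unset Strict Implicit. Unset Printing Implicit Defensive.
Import Order.TTheory GRing.Theory Num.Theory.
Local Open Scope ring_scope.

Definition Delta (C : zmodType) (A : int -> C) : int -> C :=
  fun n => A (n + 1) - A n.

Definition anticomm (R : pzRingType) (X Y : R) : R := X * Y + Y * X.

(* Main.v *)
Require Import Defs.
From HB Require Import structures.
From mathcomp Require Import all_boot all_order all_algebra.
From mathcomp Require Import ring.
From Stdlib Require Import FunctionalExtensionality.
Import Order.TTheory GRing.Theory Num.Theory.
Local Open Scope ring_scope.

Lemma addr5ACA (V : zmodType) (a1 b1 c1 d1 e1 a2 b2 c2 d2 e2 : V) :
  (a1+b1+c1+d1+e1)+(a2+b2+c2+d2+e2) = (a1+a2)+(b1+b2)+(c1+c2)+(d1+d2)+(e1+e2).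
Proof. rewrite addrACA; congr (_+_); rewrite addrACA; congr (_+_); rewrite addrACA; congr (_+_); by rewrite addrACA. Qed.

Definition NF (C : numClosedFieldType) (Alg : algType C) (ev : (int -> C) -> Alg) (b bd : Alg)
  (p2 p1 q r1 r2 : int -> C) : Alg :=
  bd * bd * ev p2 + bd * ev p1 + ev q + ev r1 * b + ev r2 * b * b.

Theorem proposition8
  (C : numClosedFieldType) (Alg : algType C)
  (M : nat) (hM : (1 <= M)%N)
  (alpha : nat -> C) (beta delta epsilon eta : C) (omega : nat -> C)
  (k : nat -> C)
  (ev : (int -> C) -> Alg) (b bd : Alg) (Phi A h rho : int -> C)
  (* f |-> f(N) is a unital algebra homomorphism *)
  (ev_add : forall f g : int -> C, ev (fun n => f n + g n) = ev f + ev g)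
  (ev_scale : forall (c : C) (f : int -> C), ev (fun n => c * f n) = c *: ev f)
  (ev_mul : forall f g : int -> C, ev (fun n => f n * g n) = ev f * ev g)
  (ev_one : ev (fun _ => 1) = 1)
  (* commutation relations *)
  (ev_bd : forall f : int -> C, ev f * bd = bd * ev (fun n => f (n + 1)))
  (ev_b : forall f : int -> C, ev f * b = b * ev (fun n => f (n - 1)))
  (bd_b : bd * b = ev Phi)
  (b_bd : b * bd = ev (fun n => Phi (n + 1)))
  (* conditions (q1)-(q4) *)
  (q1 : forall n : int, (Delta A n) ^+ 2 = delta + beta * (A n + A (n + 1)))
  (q2 : forall n : int,
     \sum_(1 <= i < (M./2).+2) alpha i * A n ^+ i + delta * h n + epsilon
       + 2%:R * beta * A n * h n = 0)
  (q3 : forall n : int, Delta A n - Delta A (n + 1) = - beta)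
  (q4 : forall n : int,
     Delta A n * (h (n + 1) - h n)
       = - beta * (h (n + 1) + h n)
         + \sum_(1 <= i < (M./2).+1) omega i * (A (n + 1) ^+ i + A n ^+ i) + eta) :
  let L := M./2 in
  let Aop := ev A in
  let Bop := ev h + bd * ev rho + ev rho * b in
  let Cop := bd * ev (Delta A) * ev rho - ev rho * ev (Delta A) * b in
  let K := Cop ^+ 2
      - \sum_(1 <= i < L.+2) alpha i *: anticomm (Aop ^+ i) Bop
      - beta *: \sum_(1 <= i < L.+1) omega i *: anticomm (Aop ^+ i) Bop
      - beta *: anticomm Aop (Bop ^+ 2)
      + \sum_(1 <= i < M.+2) k i *: Aop ^+ i
      - (2%:R * epsilon + beta * eta) *: Bop
      + (beta ^+ 2 - delta) *: Bop ^+ 2 in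
  let kappa := fun n : int =>
      - (Delta A (n - 1)) ^+ 2 * rho (n - 1) ^+ 2 * Phi n
      - (Delta A n) ^+ 2 * rho n ^+ 2 * Phi (n + 1)
      - 2%:R * (\sum_(1 <= i < L.+2) alpha i * A n ^+ i * h n)
      - 2%:R * beta * (\sum_(1 <= i < L.+1) omega i * A n ^+ i * h n)
      - 2%:R * beta * A n * h n ^+ 2
      - 2%:R * beta * A n * (rho (n - 1) ^+ 2 * Phi n + rho n ^+ 2 * Phi (n + 1))
      + \sum_(1 <= i < M.+2) k i * A n ^+ i
      - (2%:R * epsilon + beta * eta) * h n
      + (beta ^+ 2 - delta) * (h n ^+ 2 + rho (n - 1) ^+ 2 * Phi n
                                + rho n ^+ 2 * Phi (n + 1)) in
  K = ev kappa.
Proof.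
move=> L Aop Bop Cop K kappa.
have evE : forall f g : int -> C, f =1 g -> ev f = ev g.
  by move=> f g /functional_extensionality ->.
have ev0 : ev (fun _ => 0) = 0.
  by rewrite -(scale0r (ev (fun _ => 0))) -ev_scale; apply: evE => n; rewrite mul0r.
have ev_sum : forall (F : nat -> int -> C) (r : seq nat),
    \sum_(i <- r) ev (F i) = ev (fun n => \sum_(i <- r) F i n).
  move=> F; elim=> [|i r IH].
    by rewrite big_nil -ev0; apply: evE => n; rewrite big_nil.
  rewrite big_cons IH -ev_add; apply: evE => n; by rewrite big_cons.
have ev_pow : forall i, ev A ^+ i = ev (fun n => A n ^+ i).
  elim=> [|i IH]; first by rewrite expr0 -ev_one; apply: evE => n; rewrite expr0.
  by rewrite exprS IH -ev_mul; apply: evE => n; rewrite exprS.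
have b_ev : forall f, b * ev f = ev (fun n => f (n + 1)) * b.
  move=> f; rewrite ev_b; congr (_ * _); apply: evE => n /=; by rewrite ?subrK ?addrK.
have bd_ev : forall f, bd * ev f = ev (fun n => f (n - 1)) * bd.
  move=> f; rewrite ev_bd; congr (_ * _); apply: evE => n /=; by rewrite ?subrK ?addrK.
pose N := @NF C Alg ev b bd.
have N_add : forall p2 p1 q r1 r2 p2' p1' q' r1' r2',
   N p2 p1 q r1 r2 + N p2' p1' q' r1' r2' =
   N (fun n => p2 n + p2' n) (fun n => p1 n + p1' n) (fun n => q n + q' n)
     (fun n => r1 n + r1' n) (fun n => r2 n + r2' n).
  move=> *; rewrite /N /NF addr5ACA !ev_add.
  by rewrite !mulrDr !mulrDl.
have N_scale : forall c p2 p1 q r1 r2, c *: N p2 p1 q r1 r2 =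
   N (fun n => c * p2 n) (fun n => c * p1 n) (fun n => c * q n)
     (fun n => c * r1 n) (fun n => c * r2 n).
  move=> *; rewrite /N /NF !ev_scale !scalerDr.
  rewrite -!scalerAr -!scalerAl.
  congr (_+_+_+_+_).
have N_sub : forall p2 p1 q r1 r2 p2' p1' q' r1' r2',
   N p2 p1 q r1 r2 - N p2' p1' q' r1' r2' =
   N (fun n => p2 n - p2' n) (fun n => p1 n - p1' n) (fun n => q n - q' n)
     (fun n => r1 n - r1' n) (fun n => r2 n - r2' n).
  move=> *; rewrite -scaleN1r N_scale N_add.
  by f_equal; apply: functional_extensionality => n; rewrite mulN1r.
pose z := fun _ : int => (0 : C).
have nP2 : forall f, N f z z z z = bd*bd*ev f.
  by move=> f; rewrite /N /NF ev0 !mulr0 !mul0r !addr0.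
have nP1 : forall f, N z f z z z = bd*ev f.
  by move=> f; rewrite /N /NF ev0 !mulr0 !mul0r !addr0 add0r.
have nQ : forall f, N z z f z z = ev f.
  by move=> f; rewrite /N /NF ev0 !mulr0 !mul0r !addr0 !add0r.
have nR1 : forall f, N z z z f z = ev f * b.
  by move=> f; rewrite /N /NF ev0 !mulr0 !mul0r !addr0 !add0r.
have nR2 : forall f, N z z z z f = ev f * b * b.
  by move=> f; rewrite /N /NF ev0 !mulr0 !mul0r !addr0 !add0r.
have N3 : forall p q r, N z p q r z = bd * ev p + ev q + ev r * b.
  by move=> p q r; rewrite /N /NF ev0 !mulr0 !mul0r !addr0 !add0r.
have N_mul : forall p q r p' q' r',
  N z p q r z * N z p' q' r' z =
  N (fun n => p (n+1) * p' n) (fun n => p n * q' n + q (n+1) * p' n)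
    (fun n => p (n-1) * r' (n-1) * Phi n + q n * q' n + r n * Phi (n+1) * p' n)
    (fun n => q n * r' n + r n * q' (n+1)) (fun n => r n * r' (n+1)).
  move=> p q r p' q' r'.
  have T11 : bd * ev p * (bd * ev p') = N (fun n => p (n+1) * p' n) z z z z.
    by rewrite nP2 ev_mul mulrA -(mulrA bd (ev p) bd) ev_bd !mulrA.
  have T12 : bd * ev p * ev q' = N z (fun n => p n * q' n) z z z.
    by rewrite nP1 ev_mul mulrA.
  have T13 : bd * ev p * (ev r' * b) = N z z (fun n => p (n-1) * r' (n-1) * Phi n) z z.
    by rewrite nQ -(mulrA bd) (mulrA (ev p)) -ev_mul mulrA bd_ev -mulrA bd_b -ev_mul.
  have T21 : ev q * (bd * ev p') = N z (fun n => q (n+1) * p' n) z z z.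
    by rewrite nP1 mulrA ev_bd -mulrA -ev_mul.
  have T22 : ev q * ev q' = N z z (fun n => q n * q' n) z z.
    by rewrite nQ ev_mul.
  have T23 : ev q * (ev r' * b) = N z z z (fun n => q n * r' n) z.
    by rewrite nR1 mulrA -ev_mul.
  have T31 : ev r * b * (bd * ev p') = N z z (fun n => r n * Phi (n+1) * p' n) z z.
    by rewrite nQ !mulrA -(mulrA _ b bd) b_bd -!ev_mul.
  have T32 : ev r * b * ev q' = N z z z (fun n => r n * q' (n+1)) z.
    by rewrite nR1 -mulrA b_ev mulrA -ev_mul.
  have T33 : ev r * b * (ev r' * b) = N z z z z (fun n => r n * r' (n+1)).
    by rewrite nR2 mulrA -(mulrA (ev r) b) b_ev mulrA -ev_mul.
  rewrite !N3 !mulrDl !mulrDr T11 T12 T13 T21 T22 T23 T31 T32 T33 !N_add.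
  by f_equal; apply: functional_extensionality => n; rewrite /z; ring.
have N_lmul : forall a p2 p1 q r1 r2, ev a * N p2 p1 q r1 r2 =
  N (fun n => a (n+1+1) * p2 n) (fun n => a (n+1) * p1 n) (fun n => a n * q n)
    (fun n => a n * r1 n) (fun n => a n * r2 n).
  move=> a p2 p1 q r1 r2; rewrite /N /NF !mulrDr !ev_mul !mulrA.
  congr (_+_+_+_+_); try done.
  - by rewrite ev_bd -(mulrA bd _ bd) ev_bd !mulrA.
  - by rewrite ev_bd.
have N_rmul : forall a p2 p1 q r1 r2, N p2 p1 q r1 r2 * ev a =
  N (fun n => p2 n * a n) (fun n => p1 n * a n) (fun n => q n * a n)
    (fun n => r1 n * a (n+1)) (fun n => r2 n * a (n+1+1)).
  move=> a p2 p1 q r1 r2; rewrite /N /NF !mulrDl !ev_mul !mulrA.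
  congr (_+_+_+_+_); try done.
  - by rewrite -mulrA b_ev mulrA.
  - by rewrite -mulrA b_ev mulrA -(mulrA (ev r2) b) b_ev !mulrA.
have N_ac : forall a p2 p1 q r1 r2, anticomm (ev a) (N p2 p1 q r1 r2) =
  N (fun n => p2 n * (a (n+1+1) + a n)) (fun n => p1 n * (a (n+1) + a n))
    (fun n => q n * (a n + a n)) (fun n => r1 n * (a n + a (n+1)))
    (fun n => r2 n * (a n + a (n+1+1))).
  move=> *; rewrite /anticomm N_lmul N_rmul N_add.
  by f_equal; apply: functional_extensionality => n; ring.
have NE : forall p2 p1 q r1 r2, p2 =1 z -> p1 =1 z -> r1 =1 z -> r2 =1 z ->
    N p2 p1 q r1 r2 = ev q.
  move=> p2 p1 q r1 r2 e2 e1 e3 e4.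
  rewrite -nQ; congr N; by apply: functional_extensionality.
have hB : Bop = N z rho h rho z by rewrite N3 /Bop (addrC (ev h)).
have hC : Cop = N z (fun n => Delta A n * rho n) z (fun n => -1 * (rho n * Delta A n)) z.
  by rewrite N3 ev0 addr0 /Cop ev_scale !ev_mul scaleN1r mulNr !mulrA.
have ac_sum : forall (c : nat -> C) r X, \sum_(i <- r) c i *: anticomm (Aop ^+ i) X
    = anticomm (ev (fun n => \sum_(i <- r) c i * A n ^+ i)) X.
  move=> c r X; rewrite -(ev_sum (fun i n => c i * A n ^+ i)) /anticomm mulr_suml mulr_sumr -big_split.
  apply: eq_bigr => i _; rewrite ev_scale -ev_pow scalerDr -scalerAl -scalerAr //.
have k_sum : forall (c : nat -> C) r, \sum_(i <- r) c i *: Aop ^+ i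
    = ev (fun n => \sum_(i <- r) c i * A n ^+ i).
  move=> c r; rewrite -(ev_sum (fun i n => c i * A n ^+ i)).
  by apply: eq_bigr => i _; rewrite ev_scale -ev_pow.
rewrite /K !ac_sum k_sum !expr2 hC hB !N_mul /Aop !N_ac -nQ.
rewrite !N_scale !N_sub !N_add N_sub N_add.
have s1 : forall n, \sum_(1 <= i < L.+2) alpha i * A n ^+ i
    = - (delta * h n + (epsilon + 2%:R * beta * A n * h n)).
  move=> n; have := q2 n; rewrite -/L => H.
  by apply/eqP; rewrite -addr_eq0 !addrA H.
have w : forall n, \sum_(1 <= i < L.+1) omega i * A (n+1) ^+ i
    = Delta A n * (h (n + 1) - h n) + beta * (h (n + 1) + h n) - eta
      - \sum_(1 <= i < L.+1) omega i * A n ^+ i.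
  move=> n; have := q4 n; rewrite -/L (eq_bigr _ (fun i _ => mulrDr _ _ _)) big_split /= => H.
  rewrite H; ring.
have d : forall n, delta = Delta A n ^+ 2 - beta * (A n + A (n + 1)).
  by move=> n; rewrite q1; ring.
have e : forall n, A (n + 1 + 1) = 2%:R * A (n + 1) - A n + beta.
  move=> n; have := q3 n; rewrite /Delta => H.
  by rewrite -[beta]opprK -H; ring.
rewrite NE.
- apply: evE => n; rewrite /kappa /z -!mulr_suml; ring.
- move=> n /=; rewrite /z (d n) /Delta e; ring.
- move=> n /=; rewrite /z s1 s1 w /Delta; ring.
- move=> n /=; rewrite /z s1 s1 w /Delta; ring.
- move=> n /=; rewrite /z (d n) /Delta e; ring.
Qed.
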